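(* Let $0<c<1$ and $\alpha \in \mathbb{C}$. Then there exists a constant $B(c)$ (also allowed to depend on $\alpha$) such that for all $0<u<c$, \[ \left|(-\log{(1-e^{-u})})^{\alpha}-(-\log{u})^{\alpha}\right| \leq B(c)\, u^{1/2}(-\log{u})^{\operatorname{Re}(\alpha)-1/2}. \]
   Context: Powers of positive reals are defined by $x^{\alpha}=e^{\alpha\log x}$. *)

(* Defs.v *)
From Stdlib Require Import Reals.
From Coquelicot Require Import Coquelicot.
Open Scope R_scope.

Definition cpow (x : R) (a : C) : C :=
  (exp (Re a * ln x) * cos (Im a * ln x), exp (Re a * ln x) * sin (Im a * ln x)).

(* Main.v *)
From Stdlib Require Import Reals Lra.
Require Import Defs.
From Coquelicot Require Import Coquelicot.
Open Scope R_scope.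

Lemma cos_lip a b : Rabs (cos a - cos b) <= Rabs (a - b).
Proof.
  destruct (MVT_abs cos (fun x => - sin x) b a) as [c [H _]].
  { intros; apply derivable_pt_lim_cos. }
  rewrite H. rewrite Rabs_Ropp. pose proof (SIN_bound c).
  rewrite <- (Rmult_1_l (Rabs (a - b))) at 2.
  apply Rmult_le_compat_r; [apply Rabs_pos|]. apply Rabs_le; lra.
Qed.

Lemma sin_lip a b : Rabs (sin a - sin b) <= Rabs (a - b).
Proof.
  destruct (MVT_abs sin cos b a) as [c [H _]].
  { intros; apply derivable_pt_lim_sin. }
  rewrite H. pose proof (COS_bound c).
  rewrite <- (Rmult_1_l (Rabs (a - b))) at 2.
  apply Rmult_le_compat_r; [apply Rabs_pos|]. apply Rabs_le; lra.
Qed.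

Lemma exp_m1 h : Rabs (exp h - 1) <= Rabs h * exp (Rabs h).
Proof.
  destruct (Rle_dec 0 h).
  - rewrite (Rabs_right h) by lra.
    pose proof (exp_ineq1_le (- h)). pose proof (exp_pos h).
    assert (exp h * exp (-h) = 1) by (rewrite <- exp_plus; replace (h + - h) with 0 by ring; apply exp_0).
    rewrite Rabs_right.
    + nra.
    + pose proof (exp_ineq1_le h); lra.
  - rewrite (Rabs_left h) by lra.
    pose proof (exp_ineq1_le h). pose proof (exp_ineq1_le (-h)).
    assert (exp h < 1) by (rewrite <- exp_0; apply exp_increasing; lra).
    rewrite Rabs_left by lra. nra.
Qed.

Lemma Cmod_pair_le x y : Cmod (x, y) <= Rabs x + Rabs y.
Proof.
  unfold Cmod; cbn [fst snd].
  rewrite <- (sqrt_pow2 (Rabs x + Rabs y)) by (pose proof (Rabs_pos x); pose proof (Rabs_pos y); lra).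
  apply sqrt_le_1_alt.
  pose proof (Rabs_pos x); pose proof (Rabs_pos y).
  replace (x ^ 2) with (Rabs x ^ 2) by apply pow2_abs.
  replace (y ^ 2) with (Rabs y ^ 2) by apply pow2_abs.
  nra.
Qed.

Lemma expdiff r a b : Rabs (exp (r * a) - exp (r * b)) <= exp (r * b) * (Rabs r * Rabs (a - b) * exp (Rabs r * Rabs (a - b))).
Proof.
  replace (exp (r * a) - exp (r * b)) with (exp (r * b) * (exp (r * (a - b)) - 1)).
  2:{ rewrite Rmult_minus_distr_l, <- exp_plus. replace (r * b + r * (a - b)) with (r * a) by ring. ring. }
  rewrite Rabs_mult, (Rabs_right (exp _)) by (left; apply exp_pos).
  apply Rmult_le_compat_l; [left; apply exp_pos|].
  rewrite <- Rabs_mult. apply exp_m1.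
Qed.

Lemma key (M L : R) (al : C) :
  Cmod (Cminus (cpow M al) (cpow L al)) <=
  2 * exp (Re al * ln L) * Rabs (ln M - ln L) *
    (Rabs (Re al) * exp (Rabs (Re al) * Rabs (ln M - ln L)) + Rabs (Im al)).
Proof.
  destruct al as [r t]. unfold Re, Im; cbn [fst snd].
  set (la := ln M). set (lb := ln L).
  unfold cpow; cbn [fst snd].
  replace (Cminus _ _) with
    (exp (r * la) * cos (t * la) - exp (r * lb) * cos (t * lb),
     exp (r * la) * sin (t * la) - exp (r * lb) * sin (t * lb))
    by (unfold Cminus, Cplus, Copp; cbn [fst snd]; f_equal; ring).
  eapply Rle_trans; [apply Cmod_pair_le|].
  set (E := exp (r * lb)). set (d := Rabs (la - lb)).
  assert (HE : 0 < E) by apply exp_pos.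
  assert (Hd : 0 <= d) by apply Rabs_pos.
  pose proof (expdiff r la lb) as HX. fold E d in HX.
  set (X := exp (r * la) - E) in HX.
  assert (Hc : Rabs (cos (t * la) - cos (t * lb)) <= Rabs t * d).
  { eapply Rle_trans; [apply cos_lip|]. unfold d; rewrite <- Rabs_mult; right; f_equal; ring. }
  assert (Hs : Rabs (sin (t * la) - sin (t * lb)) <= Rabs t * d).
  { eapply Rle_trans; [apply sin_lip|]. unfold d; rewrite <- Rabs_mult; right; f_equal; ring. }
  assert (H1 : Rabs (exp (r * la) * cos (t * la) - E * cos (t * lb)) <= Rabs X + E * (Rabs t * d)).
  { replace (exp (r * la) * cos (t * la) - E * cos (t * lb)) with
      (X * cos (t * la) + E * (cos (t * la) - cos (t * lb))) by (unfold X; ring).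
    eapply Rle_trans; [apply Rabs_triang|]. rewrite !Rabs_mult.
    rewrite (Rabs_right E) by lra.
    pose proof (COS_bound (t * la)). assert (Rabs (cos (t * la)) <= 1) by (apply Rabs_le; lra).
    pose proof (Rabs_pos X). pose proof (Rabs_pos (cos (t * la))).
    pose proof (Rabs_pos (cos (t * la) - cos (t * lb))). nra. }
  assert (H2 : Rabs (exp (r * la) * sin (t * la) - E * sin (t * lb)) <= Rabs X + E * (Rabs t * d)).
  { replace (exp (r * la) * sin (t * la) - E * sin (t * lb)) with
      (X * sin (t * la) + E * (sin (t * la) - sin (t * lb))) by (unfold X; ring).
    eapply Rle_trans; [apply Rabs_triang|]. rewrite !Rabs_mult.
    rewrite (Rabs_right E) by lra.
    pose proof (SIN_bound (t * la)). assert (Rabs (sin (t * la)) <= 1) by (apply Rabs_le; lra).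
    pose proof (Rabs_pos X). pose proof (Rabs_pos (sin (t * la))).
    pose proof (Rabs_pos (sin (t * la) - sin (t * lb))). nra. }
  lra.
Qed.

Lemma exp_mono x y : x <= y -> exp x <= exp y.
Proof. intros [H|H]; [left; apply exp_increasing; exact H | subst; right; reflexivity]. Qed.

Theorem proposition1 (c : R) (alpha : C) :
  0 < c < 1 ->
  exists B : R, forall u : R, 0 < u < c ->
    Cmod (Cminus (cpow (- ln (1 - exp (- u))) alpha) (cpow (- ln u) alpha))
      <= B * (Rpower u (1 / 2) * Rpower (- ln u) (Re alpha - 1 / 2)).
Proof.
  intros [Hc0 Hc1].
  set (L0 := - ln c).
  assert (HL0 : 0 < L0).
  { unfold L0. assert (ln c < ln 1) by (apply ln_increasing; lra). rewrite ln_1 in H. lra. }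
  set (r := Re alpha). set (t := Im alpha).
  set (C1 := Rabs r * exp (Rabs r * / L0) + Rabs t).
  set (W0 := exp (- (1/2) * ln L0)).
  exists (2 * C1 * W0).
  intros u [Hu0 Huc].
  set (v := 1 - exp (- u)).
  set (L := - ln u). set (M := - ln v).
  assert (Hev : exp (- u) < 1) by (rewrite <- exp_0; apply exp_increasing; lra).
  assert (Hv0 : 0 < v) by (unfold v; lra).
  assert (Hvu : v <= u) by (unfold v; pose proof (exp_ineq1_le (- u)); lra).
  assert (Huv : u <= exp u * v).
  { unfold v. rewrite Rmult_minus_distr_l, <- exp_plus. replace (u + - u) with 0 by ring.
    rewrite exp_0. pose proof (exp_ineq1_le u); lra. }
  assert (HLL0 : L0 < L).
  { unfold L, L0. assert (ln u < ln c) by (apply ln_increasing; lra). lra. }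
  assert (HML : L <= M).
  { unfold L, M. assert (ln v <= ln u) by (apply ln_le; lra). lra. }
  assert (HMLu : M - L <= u).
  { unfold L, M. assert (ln u <= ln (exp u * v)) by (apply ln_le; lra).
    rewrite ln_mult, ln_exp in H by (try apply exp_pos; lra). lra. }
  set (dl := ln M - ln L).
  assert (Hd0 : 0 <= dl).
  { unfold dl. assert (ln L <= ln M) by (apply ln_le; lra). lra. }
  assert (Hd1 : dl <= u / L).
  { unfold dl. rewrite <- ln_div by lra.
    pose proof (exp_ineq1_le (ln (M / L))). rewrite exp_ln in H.
    2:{ apply Rdiv_lt_0_compat; lra. }
    assert (M / L - 1 = (M - L) / L) by (field; lra).
    assert ((M - L) / L <= u / L) by (apply Rmult_le_compat_r; [left; apply Rinv_0_lt_compat; lra | lra]).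
    lra. }
  assert (Hd2 : dl <= / L0).
  { eapply Rle_trans; [apply Hd1|]. unfold Rdiv.
    assert (/ L < / L0) by (apply Rinv_lt_contravar; nra).
    assert (0 < / L) by (apply Rinv_0_lt_compat; lra). nra. }
  pose proof (key M L alpha) as HK. fold r t dl in HK.
  rewrite Rabs_right in HK by lra.
  assert (HKe : exp (Rabs r * dl) <= exp (Rabs r * / L0)).
  { apply exp_mono. apply Rmult_le_compat_l; [apply Rabs_pos|lra]. }
  set (E := exp (r * ln L)) in *.
  assert (HE : 0 < E) by apply exp_pos.
  assert (HC1 : 0 <= C1) by (unfold C1; pose proof (Rabs_pos r); pose proof (Rabs_pos t); pose proof (exp_pos (Rabs r * / L0)); nra).
  assert (HB1 : Cmod (Cminus (cpow M alpha) (cpow L alpha)) <= 2 * E * (u / L) * C1).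
  { eapply Rle_trans; [apply HK|]. unfold C1.
    pose proof (Rabs_pos r); pose proof (Rabs_pos t). pose proof (exp_pos (Rabs r * dl)).
    assert (0 <= u / L) by (apply Rdiv_le_0_compat; lra).
    assert (Rabs r * exp (Rabs r * dl) <= Rabs r * exp (Rabs r * / L0)) by (apply Rmult_le_compat_l; lra).
    apply Rmult_le_compat; nra. }
  unfold Rpower. fold r.
  set (U := exp (1 / 2 * ln u)). set (W := exp (- (1/2) * ln L)).
  assert (HU : U * U = u).
  { unfold U. rewrite <- exp_plus. replace (1 / 2 * ln u + 1 / 2 * ln u) with (ln u) by field. apply exp_ln; lra. }
  assert (HW : W * W * L = 1).
  { unfold W. rewrite <- exp_plus. replace (- (1 / 2) * ln L + - (1 / 2) * ln L) with (- ln L) by field.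
    rewrite exp_Ropp, exp_ln by lra. field; lra. }
  assert (HEW : exp ((r - 1 / 2) * ln L) = E * W).
  { unfold E, W. rewrite <- exp_plus. f_equal; ring. }
  assert (HU1 : U <= 1).
  { unfold U. apply Rle_trans with (exp 0); [apply exp_mono | rewrite exp_0; lra].
    assert (Hl1 : ln u < ln 1) by (apply ln_increasing; lra). rewrite ln_1 in Hl1. lra. }
  assert (HWW0 : W <= W0).
  { unfold W, W0. apply exp_mono. assert (ln L0 < ln L) by (apply ln_increasing; lra). lra. }
  assert (HU0 : 0 < U) by apply exp_pos. assert (HW0 : 0 < W) by apply exp_pos.
  rewrite HEW. eapply Rle_trans; [apply HB1|].
  assert (Hul : u / L = U * U * (W * W)) by (rewrite HU; apply (Rmult_eq_reg_r L); [|lra]; replace (u * (W * W) * L) with (u * (W * W * L)) by ring; rewrite HW; field; lra).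
  rewrite Hul.
  assert (U * U * (W * W) <= U * W * W0).
  { assert (U * U <= U) by nra. assert (W * W <= W * W0) by nra. nra. }
  assert (0 <= 2 * E * C1) by nra.
  replace (2 * E * (U * U * (W * W)) * C1) with ((2 * E * C1) * (U * U * (W * W))) by ring.
  replace (2 * C1 * W0 * (U * (E * W))) with ((2 * E * C1) * (U * W * W0)) by ring.
  apply Rmult_le_compat_l; lra.
Qed.
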